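(* Let $L$ be a precompact Hausdorff co-Heyting algebra, identified with its image in $\widehat L$. Then: (1) $L$ and $\widehat L$ have the same completely meet irreducible elements; (2) the maps $x\mapsto x^{\vee}=\bigwedge\{y\in L: y\not\le x\}$ and $x\mapsto x^{\wedge}=\bigvee\{y\in L: x\not\le y\}$ are well defined and are mutually inverse, order preserving bijections between $\mathcal I^{!\wedge}(L)$ and $\mathcal I^{!\vee}(L)$ (with $x\mapsto x^\vee$ going from $\mathcal I^{!\wedge}(L)$ to $\mathcal I^{!\vee}(L)$ and $x\mapsto x^\wedge$ going back); (3) for every $x\in\mathcal I^{!\wedge}(L)$, the cofoundation rank of $x$ in $\mathcal I^{!\wedge}(L)$ is finite; (4) $\mathcal I^{!\wedge}(L)$ satisfies the ascending chain condition; (5) every $a\in L$ is the complete meet of $\{x\in\mathcal I^{!\wedge}(L): a\le x\}$.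
   Context: A co-Heyting algebra is a bounded distributive lattice $(L,0,1,\vee,\wedge)$ such that $a-b=\min\{c\in L: a\le b\vee c\}$ exists for all $a,b$. For an ideal $I$, $L/I$ is the quotient by $a\equiv_I b\iff(a-b)\vee(b-a)\in I$. $\operatorname{Spec}L$ is the set of prime filters ordered by inclusion; height = foundation rank there; $\operatorname{codim}_La=\min\{\operatorname{height}\mathfrak p: a\in\mathfrak p\}$ ($+\infty$ if none); $dL=\{a:\operatorname{codim}_La\ge d\}$ is an ideal. $L$ is Hausdorff if every nonzero element has finite codimension; precompact if $L/dL$ is finite for every positive integer $d$. $\widehat L$ is the projective limit of the quotients $L/dL$ under the canonical surjections $L/(d+1)L\to L/dL$, with $L$ embedded diagonally. $x\ne0$ is completely join irreducible if $x\le\bigvee A$ implies $x\le a$ for some $a\in A$; $x\ne1$ is completely meet irreducible if $\bigwedge A\le x$ implies $a\le x$ for some $a\in A$. $\mathcal I^{!\vee}(L)$, $\mathcal I^{!\wedge}(L)$ denote the sets of completely join, resp. meet, irreducible elements. Cofoundation rank in an ordered set is the foundation rank for the reverse order. *)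

(* Defs.v *)
From mathcomp Require Import all_boot all_order.
Set Implicit Arguments. Unset Strict Implicit. Unset Printing Implicit Defensive.
Import Order.Theory.
Local Open Scope order_scope.

(* D : the carrier predicate (elements of the structure), le : its order.       *)

Definition is_lb {T} (le : T -> T -> Prop) (A : T -> Prop) (m : T) :=
  forall a, A a -> le m a.
Definition is_ub {T} (le : T -> T -> Prop) (A : T -> Prop) (m : T) :=
  forall a, A a -> le a m.

Definition is_inf {T} (le : T -> T -> Prop) (D : T -> Prop) (A : T -> Prop) (m : T) :=
  D m /\ is_lb le A m /\ forall m', D m' -> is_lb le A m' -> le m' m.
Definition is_sup {T} (le : T -> T -> Prop) (D : T -> Prop) (A : T -> Prop) (m : T) :=
  D m /\ is_ub le A m /\ forall m', D m' -> is_ub le A m' -> le m m'.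

Definition cmi_gen {T} (le : T -> T -> Prop) (D : T -> Prop) (top : T) (x : T) :=
  D x /\ ~ le top x /\
  forall (A : T -> Prop) m, (forall a, A a -> D a) -> is_inf le D A m -> le m x ->
    exists a, A a /\ le a x.
Definition cji_gen {T} (le : T -> T -> Prop) (D : T -> Prop) (bot : T) (x : T) :=
  D x /\ ~ le x bot /\
  forall (A : T -> Prop) m, (forall a, A a -> D a) -> is_sup le D A m -> le x m ->
    exists a, A a /\ le x a.

(* For finite n this says exactly "(foundation) rank of x w.r.t. lt is >= n"
   (elements outside the well-founded part have infinite rank). *)
Fixpoint rank_ge {T} (lt : T -> T -> Prop) (x : T) (n : nat) : Prop :=
  match n with
  | 0 => True
  | S m => exists y, lt y x /\ rank_ge lt y m
  end.
Definition rank_finite {T} (lt : T -> T -> Prop) (x : T) := exists n, ~ rank_ge lt x n.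

Section CoHeyting.
Context {disp : Order.disp_t} {L : tbDistrLatticeType disp}.

Definition is_coHeyting_diff (sub : L -> L -> L) :=
  forall a b, a <= b `|` sub a b /\ forall c, a <= b `|` c -> sub a b <= c.

Definition Lle (a b : L) : Prop := a <= b.
Definition Lall (_ : L) : Prop := True.
Definition cmiL (x : L) := cmi_gen Lle Lall \top x.
Definition cjiL (x : L) := cji_gen Lle Lall \bot x.

Definition congr_mod (sub : L -> L -> L) (I : L -> Prop) (a b : L) :=
  I (sub a b `|` sub b a).

Definition finite_quotient (sub : L -> L -> L) (I : L -> Prop) :=
  exists s : seq L, forall a, exists2 b, b \in s & congr_mod sub I a b.

Definition prime_filter (p : L -> Prop) :=
  p \top /\ ~ p \bot /\ (forall a b, a <= b -> p a -> p b) /\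
  (forall a b, p a -> p b -> p (a `&` b)) /\
  (forall a b, p (a `|` b) -> p a \/ p b).

Definition spec_lt (q p : L -> Prop) :=
  prime_filter q /\ (forall a, q a -> p a) /\ exists a, p a /\ ~ q a.

Definition height_ge (p : L -> Prop) (n : nat) := rank_ge spec_lt p n.

(* codim_L a >= d  (min over prime filters containing a; +oo if none) *)
Definition codim_ge (a : L) (d : nat) :=
  forall p, prime_filter p -> p a -> height_ge p d.

Definition dL (d : nat) : L -> Prop := fun a => codim_ge a d.

Definition codim_finite (a : L) :=
  exists p, prime_filter p /\ p a /\ rank_finite spec_lt p.

End CoHeyting.

Definition hausdorff {disp : Order.disp_t} (L : tbDistrLatticeType disp) :=
  forall a : L, a <> \bot -> codim_finite a.

Definition precompact {disp : Order.disp_t} {L : tbDistrLatticeType disp}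
  (sub : L -> L -> L) :=
  forall d, 0 < d -> finite_quotient sub (dL d).

(* An element of hat L is represented by a sequence of representatives x d
   (only the d >= 1 components matter) with x (d+1) = x d in L/dL.
   Equality / order are those of the projective limit of the lattices L/dL:
   [a] <= [b] in L/dL iff [a /\ b] = [a]. *)
Section Completion.
Context {disp : Order.disp_t} {L : tbDistrLatticeType disp} (sub : L -> L -> L).

Definition hat_elem (x : nat -> L) :=
  forall d, 0 < d -> congr_mod sub (dL d) (x d.+1) (x d).

Definition hat_le (x y : nat -> L) :=
  forall d, 0 < d -> congr_mod sub (dL d) (x d `&` y d) (x d).

Definition hat_eq (x y : nat -> L) := hat_le x y /\ hat_le y x.

Definition hat_top : nat -> L := fun _ => \top.

Definition hat_of (a : L) : nat -> L := fun _ => a.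

Definition cmi_hat (x : nat -> L) := cmi_gen hat_le hat_elem hat_top x.

End Completion.

(* Main.v *)
Require Import Defs.
From mathcomp Require Import all_boot all_order.
From Stdlib Require Import Classical ClassicalEpsilon.
From mathcomp Require classical_sets.
Import Order.Theory.
Local Open Scope order_scope.

Definition dec (P : Prop) : bool :=
  if excluded_middle_informative P then true else false.
Lemma decP (P : Prop) : dec P = true <-> P.
Proof. rewrite /dec; case: excluded_middle_informative => //. Qed.

Lemma rank_mono {T} (lt : T -> T -> Prop) n : forall x,
  rank_ge lt x n.+1 -> rank_ge lt x n.
Proof.
elim: n => [//|n IH] x [y [Hy Hr]]; exists y; split => //; exact: IH.
Qed.

Lemma rank_mono_le {T} (lt : T -> T -> Prop) m n x :
  (m <= n)%N -> rank_ge lt x n -> rank_ge lt x m.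
Proof.
move=> /subnK <-; elim: (n - m)%N => [//|k IH] H; apply: IH; exact: rank_mono.
Qed.

Lemma classical_min (P : nat -> Prop) : (exists n, P n) ->
  exists n, P n /\ forall m, P m -> (n <= m)%N.
Proof.
move=> ex.
have ex' : exists n, dec (P n) by case: ex => n Hn; exists n; apply/decP.
exists (ex_minn ex'); case: ex_minnP => n /decP Hn Hmin; split => // m Hm.
by apply: Hmin; apply/decP.
Qed.

Section Main.
Context {disp : Order.disp_t} {L : tbDistrLatticeType disp}.
Variable sub : L -> L -> L.
Hypothesis Hsub : is_coHeyting_diff sub.

Local Notation DD := (@dL disp L).
Lemma sub_le a b : a <= b `|` sub a b. Proof. exact: (Hsub a b).1. Qed.
Lemma sub_min a b c : a <= b `|` c -> sub a b <= c. Proof. exact: (Hsub a b).2. Qed.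
Lemma sub_self_le a b : sub a b <= a. Proof. exact/sub_min/leUr. Qed.
Lemma sub_eq0 a b : a <= b -> sub a b = \bot.
Proof. by move=> ab; apply/le_anti; rewrite le0x andbT; apply: sub_min; rewrite joinx0. Qed.
Lemma sub0_le a b : sub a b = \bot -> a <= b.
Proof. by move=> e; have := sub_le a b; rewrite e joinx0. Qed.
Lemma sub_trans a b c : sub a c <= sub a b `|` sub b c.
Proof.
apply: sub_min; apply: le_trans (sub_le a b) _.
rewrite leUx; apply/andP; split.
  apply: le_trans (sub_le b c) _.
  exact: leU2 (le_refl _) (leUr _ _).
by rewrite joinCA leUl.
Qed.
Lemma sub_mono_l a a' b : a <= a' -> sub a b <= sub a' b.
Proof. by move=> h; apply: sub_min; apply: le_trans h (sub_le _ _). Qed.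
Lemma sub_anti_r a b b' : b' <= b -> sub a b <= sub a b'.
Proof. by move=> h; apply: sub_min; apply: le_trans (sub_le a b') _; apply: leU2. Qed.
Lemma sub_joinl a b c : sub (a `|` b) c <= sub a c `|` sub b c.
Proof.
apply: sub_min; rewrite leUx; apply/andP; split.
  apply: le_trans (sub_le a c) _; apply: leU2 => //; exact: leUl.
apply: le_trans (sub_le b c) _; apply: leU2 => //; exact: leUr.
Qed.
Lemma sub_meetr m z w : sub m (z `&` w) <= sub m z `|` sub m w.
Proof.
apply: sub_min; rewrite joinIl lexI; apply/andP; split.
  apply: le_trans (sub_le m z) _; exact: leU2 (le_refl _) (leUl _ _).
apply: le_trans (sub_le m w) _; exact: leU2 (le_refl _) (leUr _ _).
Qed.
Lemma sub_join_le x M : sub (x `|` M) x <= M.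
Proof. by apply: sub_min. Qed.

Lemma pf_top {p : L -> Prop} : prime_filter p -> p \top. Proof. by case. Qed.
Lemma pf_bot {p : L -> Prop} : prime_filter p -> ~ p \bot. Proof. by case=> _ []. Qed.
Lemma pf_up {p : L -> Prop} : prime_filter p -> forall a b, a <= b -> p a -> p b.
Proof. by case=> _ [] _ []. Qed.
Lemma pf_meet {p : L -> Prop} : prime_filter p -> forall a b, p a -> p b -> p (a `&` b).
Proof. by case=> _ [] _ [] _ []. Qed.
Lemma pf_join {p : L -> Prop} : prime_filter p -> forall a b, p (a `|` b) -> p a \/ p b.
Proof. by case=> _ [] _ [] _ []. Qed.
Arguments pf_up {p} _ {a b}.
Arguments pf_meet {p} _ {a b}.
Arguments pf_join {p} _ {a b}.
Lemma pf_sub {p : L -> Prop} a b (hp : prime_filter p) : p a -> ~ p b -> p (sub a b).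
Proof.
move=> pa npb; have := pf_up hp (sub_le a b) pa.
by case/(pf_join hp).
Qed.

Arguments pf_sub {p a b}.
Lemma I_down d a b : a <= b -> DD d b -> DD d a.
Proof. move=> ab Hb p hp pa; apply: Hb => //; exact: pf_up ab pa. Qed.
Lemma I_join d a b : DD d a -> DD d b -> DD d (a `|` b).
Proof. move=> Ha Hb p hp /(pf_join hp) [pa|pb]; [exact: Ha|exact: Hb]. Qed.
Lemma I_bot d : DD d (\bot : L).
Proof. by move=> p hp /(pf_bot hp). Qed.
Lemma I_0 (a : L) : DD 0 a. Proof. by []. Qed.
Lemma I_mono d e (a : L) : (d <= e)%N -> DD e a -> DD d a.
Proof. move=> de H p hp pa; apply: rank_mono_le de _; exact: H. Qed.

Lemma spec_incl (p r : L -> Prop) n : (forall a, p a -> r a) ->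
  rank_ge spec_lt p n -> rank_ge spec_lt r n.
Proof.
case: n => [//|n] pr [y [[hy [yp [a [pa nya]]]] Hr]].
exists y; split => //; split => //; split; first by move=> b /yp /pr.
by exists a; split => //; exact: pr.
Qed.

Lemma ht_I (p : L -> Prop) d (a : L) : prime_filter p -> ~ rank_ge spec_lt p d -> DD d a -> ~ p a.
Proof. by move=> hp nr Ha pa; apply: nr; exact: Ha. Qed.

Lemma saturate (p : L -> Prop) d a b : prime_filter p ->
  (forall c, DD d c -> ~ p c) -> p a -> DD d (sub a b) -> p b.
Proof.
move=> hp hI pa Hab; have := pf_up hp (sub_le a b) pa.
by case/(pf_join hp) => // /hI.
Qed.


Lemma PFT (J : L -> Prop) (m : L) :
  (forall a b, a <= b -> J b -> J a) -> (forall a b, J a -> J b -> J (a `|` b)) ->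
  J \bot -> ~ J m ->
  exists r, prime_filter r /\ r m /\ forall z, J z -> ~ r z.
Proof.
move=> Jd Jj J0 nJm.
pose ext (X : L -> Prop) := fun z => m <= z \/ X z.
pose good (G : L -> Prop) := (forall a b, a <= b -> G a -> G b) /\
  (forall a b, G a -> G b -> G (a `&` b)) /\ (forall z, G z -> ~ J z).
have := @classical_sets.Zorn_bigcup L (fun X => good (ext X)).
case.
- move=> F FP Ftot.
  rewrite /classical_sets.bigcup /classical_sets.mkset /=.
  split; [|split].
  + move=> a b ab [ma|[X FX Xa]]; first by left; exact: le_trans ma ab.
    have [up _] := FP X FX.
    case: (up a b ab (or_intror Xa)) => [mb|Xb]; [by left|right; by exists X].
  + move=> a b [ma|[X FX Xa]] [mb|[Y FY Yb]].
    * by left; rewrite lexI ma mb.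
    * have [_ [mt _]] := FP Y FY.
      case: (mt a b (or_introl ma) (or_intror Yb)) => h; [by left|right; by exists Y].
    * have [_ [mt _]] := FP X FX.
      case: (mt a b (or_intror Xa) (or_introl mb)) => h; [by left|right; by exists X].
    * case: (Ftot X Y FX FY) => [XY|YX].
        have [_ [mt _]] := FP Y FY.
        case: (mt a b (or_intror (XY a Xa)) (or_intror Yb)) => h; [by left|right; by exists Y].
      have [_ [mt _]] := FP X FX.
      case: (mt a b (or_intror Xa) (or_intror (YX b Yb))) => h; [by left|right; by exists X].
  + move=> z [mz|[X FX Xz]]; first by move=> Jz; apply: nJm; exact: Jd mz Jz.
    exact: (FP X FX).2.2 z (or_intror Xz).
- move=> A [[Aup [Ameet Adisj]] Amax].
  exists (ext A); split; last first.
    split; first by left.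
    by move=> z Jz h; exact: Adisj _ h Jz.
  split; first by left; exact: lex1.
  split; first by move=> h; exact: (Adisj _ h J0).
  split; first exact: Aup.
  split; first exact: Ameet.
  move=> a b Gab; apply: NNPP => /not_or_and [nGa nGb].
  have key : forall c, ~ ext A c -> exists g, ext A g /\ J (g `&` c).
    move=> c nGc; apply: NNPP => hne.
    pose Gc := fun z => exists g, ext A g /\ g `&` c <= z.
    have conv : forall x, ext Gc x -> exists g, ext A g /\ g `&` c <= x.
      move=> x [mx|//]; exists m; split; first by left.
      exact: le_trans (leIl _ _) mx.
    apply: (Amax Gc).
      split; first by move=> z Az; exists z; split; [by right|exact: leIl].
      move=> h; apply: nGc; right; apply: h; exists \top; split; first by left; exact: lex1.
      exact: leIr.
    split; [|split].
    + move=> x y xy /conv [g [Gg gx]]; right; exists g; split => //; exact: le_trans gx xy.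
    + move=> x y /conv [g1 [G1 g1x]] /conv [g2 [G2 g2y]]; right.
      exists (g1 `&` g2); split; first exact: Ameet.
      rewrite lexI; apply/andP; split.
        apply: le_trans g1x; apply: leI2 (leIl _ _) (le_refl _).
      apply: le_trans g2y; apply: leI2 (leIr _ _) (le_refl _).
    + move=> z /conv [g [Gg gz]] Jz; apply: hne; exists g; split => //; exact: Jd gz Jz.
  have [g1 [G1 J1]] := key a nGa; have [g2 [G2 J2]] := key b nGb.
  apply: (Adisj (g1 `&` g2 `&` (a `|` b))); first by apply: (Ameet) => //; exact: (Ameet).
  apply: (Jd _ _ _ (Jj _ _ J1 J2)).
  rewrite meetUr; apply: leU2; apply: leI2 (le_refl _).
    exact: leIl.
  exact: leIr.
Qed.


Arguments saturate {p d a b}.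
Arguments ht_I {p d a}.

Definition htE (p : L -> Prop) n :=
  rank_ge spec_lt p n /\ ~ rank_ge spec_lt p n.+1.

Lemma ht_exists (p : L -> Prop) n : ~ rank_ge spec_lt p n ->
  exists H, (H < n)%N /\ htE p H.
Proof.
elim: n => [|n IH] nr; first by exfalso; apply: nr.
case: (classic (rank_ge spec_lt p n)) => h.
  by exists n; split.
have [H [lt e]] := IH h; exists H; split => //; exact: ltnW.
Qed.

Lemma descend (r : L -> Prop) H n : prime_filter r -> htE r H -> (n <= H)%N ->
  exists q, prime_filter q /\ (forall a, q a -> r a) /\ htE q n.
Proof.
elim: H r => [|H IH] r hr [rH nrH] nH.
  move: nH; rewrite leqn0 => /eqP ->; by exists r.
case: (leqP n H) => [nH'|Hn].
  case: rH => t [tr tH].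
  have nt : ~ rank_ge spec_lt t H.+1 by move=> h; apply: nrH; exists t.
  have [q [hq [qt qn]]] := IH t tr.1 (conj tH nt) nH'.
  exists q; split => //; split => // a /qt; exact: tr.2.1.
have -> : n = H.+1 by apply/eqP; rewrite eqn_leq nH Hn.
by exists r.
Qed.

Arguments ht_exists {p n}.
Arguments descend {r H n}.
Definition sj (l : seq L) := foldr (fun t acc => t `|` acc) \bot l.
Definition sm (l : seq L) := foldr (fun t acc => t `&` acc) \top l.

Lemma sj_ub l t : t \in l -> t <= sj l.
Proof.
elim: l => [//|u l IH]; rewrite in_cons => /orP [/eqP ->|h] /=; first exact: leUl.
exact: le_trans (IH h) (leUr _ _).
Qed.
Lemma sm_lb l t : t \in l -> sm l <= t.
Proof.
elim: l => [//|u l IH]; rewrite in_cons => /orP [/eqP ->|h] /=; first exact: leIl.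
exact: le_trans (leIr _ _) (IH h).
Qed.
Lemma sj_ind (Q : L -> Prop) l : Q \bot -> (forall a b, Q a -> Q b -> Q (a `|` b)) ->
  (forall t, t \in l -> Q t) -> Q (sj l).
Proof.
move=> Q0 QU; elim: l => [//|u l IH] Hl /=; apply: QU.
  by apply: Hl; rewrite in_cons eqxx.
by apply: IH => t tl; apply: Hl; rewrite in_cons tl orbT.
Qed.
Lemma sm_ind (Q : L -> Prop) l : Q \top -> (forall a b, Q a -> Q b -> Q (a `&` b)) ->
  (forall t, t \in l -> Q t) -> Q (sm l).
Proof.
move=> Q0 QU; elim: l => [//|u l IH] Hl /=; apply: QU.
  by apply: Hl; rewrite in_cons eqxx.
by apply: IH => t tl; apply: Hl; rewrite in_cons tl orbT.
Qed.

Fixpoint subl (s : seq L) : seq (seq L) :=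
  if s is t :: s' then subl s' ++ map (cons t) (subl s') else [:: [::]].

Lemma subl_filter (P : pred L) s : filter P s \in subl s.
Proof.
elim: s => [|t s IH] /=; first by rewrite inE.
case: (P t); rewrite mem_cat; apply/orP; [right; exact: map_f|by left].
Qed.

Lemma mem_filter_dec (P : L -> Prop) s t : t \in [seq u <- s | dec (P u)] -> P t.
Proof. by rewrite mem_filter => /andP [/decP]. Qed.
Lemma mem_filter_dec2 (P : L -> Prop) s t : P t -> t \in s -> t \in [seq u <- s | dec (P u)].
Proof. by move=> Pt ts; rewrite mem_filter ts andbT; apply/decP. Qed.

Hypothesis Hhaus : hausdorff L.
Hypothesis Hpre : precompact sub.

Lemma reps d : (0 < d)%N -> exists s : seq L, forall a,
  exists2 b, b \in s & DD d (sub a b) /\ DD d (sub b a).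
Proof.
move=> d0; have [s Hs] := Hpre d d0; exists s => a.
have [b bs Hab] := Hs a; exists b => //; split.
  exact: I_down (leUl _ _) Hab.
exact: I_down (leUr _ _) Hab.
Qed.

Lemma MINGEN m a : sub m a <> \bot ->
  exists r, prime_filter r /\ r m /\ ~ r a /\ exists H, htE r H.
Proof.
move=> ne.
have [r0 [hr0 [r0c [n nr0]]]] := Hhaus _ ne.
have ex : exists H, exists r, prime_filter r /\ r (sub m a) /\ htE r H.
  by have [H [_ eH]] := ht_exists nr0; exists H, r0.
have [H [[r [hr [rc eH]]] Hmin]] := classical_min _ ex.
have rm : r m := pf_up hr (sub_self_le m a) rc.
exists r; split => //; split => //; split; last by exists H.
move=> ra.
pose J := fun z => exists u, ~ r u /\ z <= a `|` u.
have [r' [hr' [r'm nr'J]]] : exists r', prime_filter r' /\ r' m /\ forall z, J z -> ~ r' z.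
  apply: PFT.
  - move=> x y xy [u [nu yu]]; exists u; split => //; exact: le_trans xy yu.
  - move=> x y [u [nu xu]] [v [nv yv]]; exists (u `|` v); split.
      by move/(pf_join hr) => [].
    rewrite leUx; apply/andP; split.
      apply: le_trans xu _; exact: leU2 (le_refl _) (leUl _ _).
    apply: le_trans yv _; exact: leU2 (le_refl _) (leUr _ _).
  - exists \bot; split; [exact: pf_bot hr|exact: le0x].
  - move=> [u [nu mu]]; apply: nu; apply: (pf_up hr _ rc); exact: sub_min.
have nr'a : ~ r' a.
  by apply: nr'J; exists \bot; split; [exact: pf_bot hr|exact: leUl].
have incl : forall z, r' z -> r z.
  move=> z r'z; apply: NNPP => nrz; apply: (nr'J z) => //; exists z; split => //; exact: leUr.
have lt : spec_lt r' r by split => //; split => //; exists a.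
have r'c : r' (sub m a) := pf_sub hr' r'm nr'a.
have nr'H : ~ rank_ge spec_lt r' H by move=> h; apply: (proj2 eH); exists r'.
have [H' [lt' eH']] := ht_exists nr'H.
have := Hmin H' (ex_intro _ r' (conj hr' (conj r'c eH'))).
by rewrite leqNgt lt'.
Qed.

Arguments MINGEN {m a}.
Lemma BND d : (0 < d)%N -> exists M, DD d M /\ forall w, DD d w -> w <= M.
Proof.
move=> d0; have [s Hs] := reps _ (ltn0Sn d).
pose M := sj [seq u <- map sm (subl s) | dec (DD d u)].
exists M; split.
  apply: (sj_ind (DD d)); [exact: I_bot|exact: I_join|move=> t; exact: mem_filter_dec].
move=> w Iw; apply: NNPP => nwM.
have ne : sub w M <> \bot by move/sub0_le.
have [r [hr [rw [nrM [H [rH nrH]]]]]] := MINGEN ne.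
have dH : (d <= H)%N.
  rewrite leqNgt; apply/negP => Hd; apply: nrH.
  exact: rank_mono_le Hd (Iw r hr rw).
have [q [hq [qr [qd nqd]]]] := descend hr (conj rH nrH) dH.
pose T := [seq t <- s | dec (q t)].
have qT : q (sm T).
  apply: (sm_ind q); [exact: pf_top hq|move=> a b qa qb|].
  refine (pf_meet hq qa qb).
  move=> t; exact: mem_filter_dec.
have IT : DD d (sm T).
  move=> r' hr' r'T; apply: NNPP => nr'.
  have incl : forall z, q z -> r' z.
    move=> z qz; have [b bs [Hzb Hbz]] := Hs z.
    have qb : q b := saturate hq (fun c Ic => ht_I hq nqd Ic) qz Hzb.
    have r'b : r' b.
      by refine (pf_up hr' _ r'T); apply: sm_lb; exact: mem_filter_dec2.
    apply: (saturate hr' (fun c Ic => ht_I hr' nr' Ic) r'b).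
    exact: I_mono (leqnSn d) Hbz.
  apply: nr'; exact: spec_incl incl qd.
have TM : sm T <= M.
  apply: sj_ub; apply: mem_filter_dec2 => //; apply: map_f; exact: subl_filter.
apply: nrM; apply: qr; exact (pf_up hq TM qT).
Qed.

Lemma FP d (q : L -> Prop) : (0 < d)%N -> prime_filter q -> (forall c, DD d c -> ~ q c) ->
  exists x y, (forall z, q z <-> y <= z) /\ (forall z, ~ q z <-> z <= x).
Proof.
move=> d0 hq hI.
have [M [IM HM]] := BND _ d0; have [s Hs] := reps _ d0.
pose x0 := sj [seq t <- s | dec (~ q t)].
pose x := x0 `|` M.
have nqx0 : ~ q x0.
  apply: (sj_ind (fun u => ~ q u)); first exact: pf_bot hq.
    by move=> a b na nb /(pf_join hq) [].
  move=> t; exact: mem_filter_dec.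
have nqx : ~ q x by move/(pf_join hq) => [//|qM]; exact: hI _ IM qM.
have Hx : forall z, ~ q z -> z <= x.
  move=> z nqz; have [b bs [Hzb Hbz]] := Hs z.
  have nqb : ~ q b by move=> qb; apply: nqz; exact: saturate hq hI qb Hbz.
  apply: le_trans (sub_le z b) _; apply: leU2; last exact: HM.
  by apply: sj_ub; exact: mem_filter_dec2.
pose y0 := sm [seq t <- s | dec (q t)].
have qy0 : q y0.
  apply: (sm_ind q); [exact: pf_top hq|move=> a b qa qb; exact: (pf_meet hq qa qb)|].
  move=> t; exact: mem_filter_dec.
have Hy0 : forall z, q z -> DD d (sub y0 z).
  move=> z qz; have [b bs [Hzb Hbz]] := Hs z.
  have qb := saturate hq hI qz Hzb.
  apply: I_down Hbz; apply: sub_mono_l; apply: sm_lb; exact: mem_filter_dec2.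
exists x, (sub y0 x); split.
  move=> z; split.
    move=> qz; apply: sub_min; apply: NNPP => hn.
    have [r [hr [ry0 nr]]] : exists r, prime_filter r /\ r y0 /\
        forall u, u <= x `|` z -> ~ r u.
      apply: (PFT (fun u => u <= x `|` z)).
      - move=> a b ab bxz; exact: le_trans ab bxz.
      - by move=> a b ha hb; rewrite leUx ha hb.
      - exact: le0x.
      - exact: hn.
    have nrxz : ~ r (x `|` z) := nr _ (le_refl _).
    have incl : forall w, r w -> q w.
      move=> w rw; apply: NNPP => nqw; apply: nrxz; refine (pf_up hr _ rw).
      exact: le_trans (Hx _ nqw) (leUl _ _).
    have hIr : forall c, DD d c -> ~ r c := fun c Ic rc => hI c Ic (incl c rc).
    apply: nrxz; refine (pf_up hr (leUr z x) _); exact: (saturate hr hIr ry0 (Hy0 z qz)).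
  move=> yz; refine (pf_up hq yz _); exact: (pf_sub hq qy0 nqx).
move=> z; split; first exact: Hx.
by move=> zx qz; apply: nqx; exact: (pf_up hq zx qz).
Qed.


Arguments FP {d q}.

Lemma I_sep (a : L) : (forall d, DD d a) -> a = \bot.
Proof.
move=> H; apply: NNPP => ne; have [p [hp [pa [n nr]]]] := Hhaus _ ne.
exact: nr (H n p hp pa).
Qed.
Lemma I_sep' (a : L) : (forall d, (0 < d)%N -> DD d a) -> a = \bot.
Proof. move=> H; apply: I_sep => -[|d]; [exact: I_0|exact: H]. Qed.

Definition split (x y : L) := forall z, y <= z <-> ~ z <= x.

Lemma split_cmi x y : split x y -> cmiL x.
Proof.
move=> sp; split => //; split; first exact: (sp \top).1 (lex1 y).
move=> A m _ [_ [lb glb]] mx; apply: NNPP => h.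
have all : forall a, A a -> y <= a.
  by move=> a Aa; apply/(sp a).2 => ax; apply: h; exists a.
have ym : y <= m by apply: glb.
exact: (sp x).1 (le_trans ym mx) (le_refl x).
Qed.

Lemma split_cji x y : split x y -> cjiL y.
Proof.
move=> sp; split => //; split; first by move=> h; exact: (sp \bot).1 h (le0x x).
move=> A m _ [_ [ub lub]] ym; apply: NNPP => h.
have all : forall a, A a -> a <= x.
  move=> a Aa; apply: NNPP => nax; apply: h; exists a; split => //.
  exact/(sp a).2.
have mx : m <= x by apply: lub.
exact: (sp x).1 (le_trans ym mx) (le_refl x).
Qed.

Arguments split_cmi {x y}.
Arguments split_cji {x y}.
Lemma split_prime x y : split x y -> prime_filter (fun z => ~ z <= x).
Proof.
move=> sp; split; first exact: (sp \top).1 (lex1 y).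
split; first by apply; exact: le0x.
split; first by move=> a b ab na bx; apply: na; exact: le_trans ab bx.
split.
  move=> a b /(sp a).2 ya /(sp b).2 yb; apply/(sp _).1.
  by rewrite lexI ya yb.
move=> a b nab; apply: NNPP => /not_or_and [/NNPP ax /NNPP bx]; apply: nab.
by rewrite leUx ax bx.
Qed.

Lemma filter_split d (q : L -> Prop) : (0 < d)%N -> prime_filter q ->
  (forall c, DD d c -> ~ q c) -> exists x y, split x y /\ forall z, q z <-> y <= z.
Proof.
move=> d0 hq hI; have [x [y [H1 H2]]] := FP d0 hq hI.
exists x, y; split => // z; split.
  by move=> yz zx; exact: ((H2 z).2 zx) ((H1 z).2 yz).
move=> nzx; apply/(H1 z).1; apply: NNPP => nqz; exact: nzx ((H2 z).1 nqz).
Qed.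

Arguments filter_split {d q}.
Lemma GEN (q : L -> Prop) : prime_filter q ->
  ~ (forall d, (0 < d)%N -> exists a, DD d a /\ q a) ->
  exists x y, split x y /\ forall z, q z <-> y <= z.
Proof.
move=> hq nall.
have [d [d0 hd]] : exists d, (0 < d)%N /\ forall c, DD d c -> ~ q c.
  apply: NNPP => h; apply: nall => d d0; apply: NNPP => h2; apply: h.
  exists d; split => // c Ic qc; apply: h2; by exists c.
exact: filter_split d0 hq hd.
Qed.

Arguments GEN {q}.
Lemma cmi_split x : cmiL x -> exists y, split x y.
Proof.
move=> hx; case: (hx) => _ [ntop main].
pose q := fun z => ~ z <= x.
have hq : prime_filter q.
  split; first exact: ntop.
  split; first by apply; exact: le0x.
  split; first by move=> a b ab na bx; apply: na; exact: le_trans ab bx.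
  split.
    move=> a b na nb abx.
    have inf : is_inf Lle Lall (fun v => v = a \/ v = b) (a `&` b).
      split => //; split.
        by move=> v [->|->]; [exact: leIl|exact: leIr].
      by move=> m' _ lb; rewrite /Lle lexI (lb a (or_introl erefl)) (lb b (or_intror erefl)).
    have [v [[->|->] vx]] := main _ _ (fun _ _ => I) inf abx; [exact: na vx|exact: nb vx].
  move=> a b nab; apply: NNPP => /not_or_and [/NNPP ax /NNPP bx]; apply: nab.
  by rewrite leUx ax bx.
have [x' [y [sp Hq]]] : exists x' y, split x' y /\ forall z, q z <-> y <= z.
  apply: (GEN hq) => hall.
  have inf : is_inf Lle Lall q \bot.
    split => //; split; first by move=> v _; exact: le0x.
    move=> m' _ lb.
    have -> : m' = \bot; last exact: le_refl.
    apply: I_sep' => d d0; have [a [Ia qa]] := hall d d0.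
    exact: I_down (lb a qa) Ia.
  have [v [qv vx]] := main _ _ (fun _ _ => I) inf (le0x x).
  exact: qv vx.
exists y => z; split; [by move/(Hq z).2|by move/(Hq z).1].
Qed.

Lemma cji_split y : cjiL y -> exists x, split x y.
Proof.
move=> hy; case: (hy) => _ [nbot main].
pose q := fun z => y <= z.
have hq : prime_filter q.
  split; first exact: lex1.
  split; first exact: nbot.
  split; first by move=> a b ab ya; exact: le_trans ya ab.
  split; first by move=> a b ya yb; rewrite /q lexI; apply/andP.
  move=> a b yab.
  have sup : is_sup Lle Lall (fun v => v = a \/ v = b) (a `|` b).
    split => //; split.
      by move=> v [->|->]; [exact: leUl|exact: leUr].
    by move=> m' _ ub; rewrite /Lle leUx (ub a (or_introl erefl)) (ub b (or_intror erefl)).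
  have [v [[->|->] yv]] := main _ _ (fun _ _ => I) sup yab; [by left|by right].
have ne : y <> \bot by move=> e; apply: nbot; rewrite e; exact: le_refl.
have [r [hr [ry [n nr]]]] := Hhaus _ ne.
have incl : forall z, q z -> r z by move=> z yz; exact (pf_up hr yz ry).
have nq : ~ rank_ge spec_lt q n by move=> h; apply: nr; exact: spec_incl incl h.
have n0 : (0 < n)%N by case: n nr nq => [|n] //; case; exact I.
have [x [y' [sp Hq]]] := filter_split n0 hq (fun c Ic => ht_I hq nq Ic).
exists x => z; split.
  by move=> yz; apply/(sp z).1/(Hq z).1.
by move=> h; apply/(Hq z).2/(sp z).2.
Qed.


Lemma split_uniq_r x y y' : split x y -> split x y' -> y = y'.
Proof.
move=> sp sp'; apply/le_anti/andP; split.
  apply/(sp y').2; exact: (sp' y').1 (le_refl _).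
apply/(sp' y).2; exact: (sp y).1 (le_refl _).
Qed.

Lemma split_uniq_l x x' y : split x y -> split x' y -> x = x'.
Proof.
move=> sp sp'; apply/le_anti/andP; split.
  apply: NNPP => h; exact: (sp x).1 ((sp' x).2 h) (le_refl _).
apply: NNPP => h; exact: (sp' x').1 ((sp x').2 h) (le_refl _).
Qed.

Arguments split_prime {x y}.
Arguments cmi_split {x}.
Arguments cji_split {y}.
Arguments split_uniq_l {x x' y}.
Arguments split_uniq_r {x y y'}.
Lemma part5 (a : L) : is_inf Lle Lall (fun x => cmiL x /\ a <= x) a.
Proof.
split => //; split; first by move=> x [].
move=> m' _ lb; apply: NNPP => nm.
have ne : sub m' a <> \bot by move/sub0_le.
have [r [hr [rm [nra [H [_ nrH]]]]]] := MINGEN ne.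
have [x [y [sp Hr]]] := filter_split (ltn0Sn H) hr (fun c Ic => ht_I hr nrH Ic).
have ax : a <= x by apply: NNPP => nax; apply: nra; apply/(Hr a).2/(sp a).2.
have mx : m' <= x := lb x (conj (split_cmi sp) ax).
exact: (sp x).1 (le_trans ((Hr m').1 rm) mx) (le_refl _).
Qed.

Definition vee (x : L) := epsilon (inhabits \bot) (fun y => split x y).
Definition wedge (y : L) := epsilon (inhabits \bot) (fun x => split x y).

Lemma vee_spec x : cmiL x -> split x (vee x).
Proof. move=> hx; exact: (epsilon_spec (inhabits \bot) (fun y => split x y) (cmi_split hx)). Qed.
Lemma wedge_spec y : cjiL y -> split (wedge y) y.
Proof. move=> hy; exact: (epsilon_spec (inhabits \bot) (fun x => split x y) (cji_split hy)). Qed.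

Arguments vee_spec {x}.
Arguments wedge_spec {y}.
Lemma part2 : exists vee wedge : L -> L,
     (forall x, cmiL x -> is_inf Lle Lall (fun y => ~ (y <= x)) (vee x)) /\
     (forall y, cjiL y -> is_sup Lle Lall (fun z => ~ (y <= z)) (wedge y)) /\
     (forall x, cmiL x -> cjiL (vee x)) /\
     (forall y, cjiL y -> cmiL (wedge y)) /\
     (forall x, cmiL x -> wedge (vee x) = x) /\
     (forall y, cjiL y -> vee (wedge y) = y) /\
     (forall x1 x2, cmiL x1 -> cmiL x2 -> x1 <= x2 -> vee x1 <= vee x2) /\
     (forall y1 y2, cjiL y1 -> cjiL y2 -> y1 <= y2 -> wedge y1 <= wedge y2).
Proof.
exists vee, wedge; split; [|split; [|split; [|split; [|split; [|split; [|split]]]]]].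
- move=> x hx; have sp := vee_spec hx; split => //; split.
    by move=> z nz; apply/(sp z).2.
  move=> m' _ lb; apply: lb; exact: (sp _).1 (le_refl _).
- move=> y hy; have sp := wedge_spec hy; split => //; split.
    move=> z nz; apply: NNPP => h; exact: nz ((sp z).2 h).
  move=> m' _ ub; apply: ub => yw; exact: (sp _).1 yw (le_refl _).
- by move=> x hx; exact: split_cji (vee_spec hx).
- by move=> y hy; exact: split_cmi (wedge_spec hy).
- move=> x hx; have sp := vee_spec hx.
  have sp' := wedge_spec (split_cji sp).
  exact: split_uniq_l sp' sp.
- move=> y hy; have sp := wedge_spec hy.
  have sp' := vee_spec (split_cmi sp).
  exact: split_uniq_r sp' sp.
- move=> x1 x2 h1 h2 x12; have sp1 := vee_spec h1; have sp2 := vee_spec h2.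
  apply/(sp1 _).2 => h; apply: (sp2 _).1 (le_refl _).
  exact: le_trans h x12.
- move=> y1 y2 h1 h2 y12; have sp1 := wedge_spec h1; have sp2 := wedge_spec h2.
  apply: NNPP => h; have := (sp2 _).2 h => y2w.
  exact: (sp1 _).1 (le_trans y12 y2w) (le_refl _).
Qed.

Lemma cmi_chain n : forall x, cmiL x ->
  rank_ge (fun y z : L => cmiL y /\ z < y) x n ->
  rank_ge spec_lt (fun z => ~ z <= x) n.
Proof.
elim: n => [//|n IH] x hx [y' [[hy' xy'] rk]].
exists (fun z => ~ z <= y'); split; last exact: IH.
have [y sp] := cmi_split hy'.
split; first exact: split_prime sp.
split.
  move=> z nz zx; apply: nz; exact: le_trans zx (ltW xy').
exists y'; split; last by apply; exact: le_refl.
by rewrite lt_geF.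
Qed.

Lemma part3 x : cmiL x -> rank_finite (fun y z : L => cmiL y /\ z < y) x.
Proof.
move=> hx; have [y sp] := cmi_split hx.
have ne : y <> \bot by move=> e; apply: (sp \bot).1; [rewrite e; exact: le_refl|exact: le0x].
have [r [hr [ry [n nr]]]] := Hhaus _ ne.
exists n => h; apply: nr; refine (spec_incl _ _ _ _ (cmi_chain n x hx h)).
by move=> z /(sp z).2 yz; exact (pf_up hr yz ry).
Qed.

Lemma part4 (u : nat -> L) : (forall n, cmiL (u n)) -> (forall n, u n <= u n.+1) ->
  exists N, forall n, (N <= n)%N -> u n = u N.
Proof.
move=> hu mon.
have mono : forall N k, u N <= u (N + k).
  move=> N; elim=> [|k IH]; first by rewrite addn0.
  by rewrite addnS; exact: le_trans IH (mon _).
apply: NNPP => h.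
have hh : forall N, exists n, u N < u n.
  move=> N; apply: NNPP => h2; apply: h; exists N => n Nn; apply: NNPP => ne.
  apply: h2; exists n; rewrite lt_def; apply/andP; split; first exact/eqP.
  by rewrite -(subnKC Nn); exact: mono.
have rk : forall k N, rank_ge (fun y z : L => cmiL y /\ z < y) (u N) k.
  elim=> [//|k IH] N; have [n lt] := hh N; exists (u n); split => //.
have [K nK] := part3 _ (hu 0).
exact: nK (rk K 0).
Qed.

Lemma sub_self a : sub a a = \bot. Proof. exact/sub_eq0/le_refl. Qed.

Lemma hat_le_iff (x y : nat -> L) : hat_le sub x y <->
  forall d, (0 < d)%N -> DD d (sub (x d) (y d)).
Proof.
have e1 : forall a b : L, sub (a `&` b) a = \bot by move=> a b; apply/sub_eq0/leIl.
have e2 : forall a b : L, sub a (a `&` b) <= sub a b.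
  move=> a b; apply: sub_min; rewrite joinIl lexI leUl /=; exact: sub_le.
have e3 : forall a b : L, sub a b <= sub a (a `&` b).
  by move=> a b; apply: sub_anti_r; exact: leIr.
split=> h d d0.
  have := h d d0; rewrite /congr_mod e1 => H.
  apply: I_down (e3 _ _) _; exact: I_down (leUr _ _) H.
rewrite /congr_mod e1; apply: I_join; first exact: I_bot.
exact: I_down (e2 _ _) (h d d0).
Qed.

Lemma hat_elem_iff (x : nat -> L) : hat_elem sub x ->
  forall d, (0 < d)%N -> DD d (sub (x d.+1) (x d)) /\ DD d (sub (x d) (x d.+1)).
Proof.
move=> h d d0; have H := h d d0; split; [exact: I_down (leUl _ _) H|exact: I_down (leUr _ _) H].
Qed.

Arguments hat_elem_iff {x}.
Lemma hat_chain (x : nat -> L) : hat_elem sub x -> forall e d, (0 < e)%N -> (e <= d)%N ->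
  DD e (sub (x d) (x e)) /\ DD e (sub (x e) (x d)).
Proof.
move=> hx e; elim=> [|d IH] e0 ed; first by move: e0; rewrite (_ : e = 0%N) //; apply/eqP; rewrite -leqn0.
case: (leqP e d) => [ed'|de].
  have [h1 h2] := IH e0 ed'.
  have [k1 k2] := hat_elem_iff hx _ (leq_trans e0 ed').
  split.
    apply: I_down (sub_trans _ (x d) _) _; apply: I_join => //; exact: I_mono ed' k1.
  apply: I_down (sub_trans _ (x d) _) _; apply: I_join => //; exact: I_mono ed' k2.
have -> : e = d.+1 by apply/eqP; rewrite eqn_leq ed de.
by rewrite sub_self; split; exact: I_bot.
Qed.

Arguments hat_chain {x}.
Lemma hat_trans (x y z : nat -> L) : hat_le sub x y -> hat_le sub y z -> hat_le sub x z.
Proof.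
move=> /hat_le_iff h1 /hat_le_iff h2; apply/hat_le_iff => d d0.
apply: I_down (sub_trans _ (y d) _) _; apply: I_join; [exact: h1|exact: h2].
Qed.

Arguments hat_trans {x y z}.
Lemma hat_refl (x : nat -> L) : hat_le sub x x.
Proof. by apply/hat_le_iff => d _; rewrite sub_self; exact: I_bot. Qed.

Lemma hat_of_le (z w : L) : hat_le sub (hat_of z) (hat_of w) <-> z <= w.
Proof.
split.
  move/hat_le_iff => h; apply: sub0_le; apply: I_sep' => d d0; exact: h d d0.
by move=> zw; apply/hat_le_iff => d _; rewrite /hat_of sub_eq0 //; exact: I_bot.
Qed.

Lemma hat_elem_of (z : L) : hat_elem sub (hat_of z).
Proof. by move=> d _; rewrite /congr_mod /hat_of sub_self joinx0; exact: I_bot. Qed.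

Lemma part1a (a : L) : cmiL a -> cmi_hat sub (hat_of a).
Proof.
move=> ha; have [y sp] := cmi_split ha.
split; first exact: hat_elem_of.
split.
  move/(hat_of_le \top a) => ta; case: ha => _ [nt _]; exact: nt ta.
move=> A m HA [hm [lbm glb]] ma; apply: NNPP => h.
have key : forall al, A al -> hat_le sub (hat_of y) al.
  move=> al Aal.
  have nal : ~ hat_le sub al (hat_of a) by move=> h'; apply: h; exists al.
  have [d0 [d00 nd0]] : exists d0, (0 < d0)%N /\ ~ DD d0 (sub (al d0) a).
    apply: NNPP => hn; apply: nal; apply/hat_le_iff => d d0; apply: NNPP => nd.
    by apply: hn; exists d.
  apply/hat_le_iff => d dpos.
  have hal := HA al Aal.
  have [c1 c2] := hat_chain hal _ _ d00 (leq_maxr d d0).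
  have [c3 c4] := hat_chain hal _ _ dpos (leq_maxl d d0).
  have ye : y <= al (maxn d d0).
    apply/(sp _).2 => ea; apply: nd0.
    apply: I_down (sub_trans _ (al (maxn d d0)) _) _; apply: I_join => //.
    by rewrite sub_eq0 //; exact: I_bot.
  apply: I_down (sub_trans _ (al (maxn d d0)) _) _; apply: I_join => //.
  by rewrite /hat_of sub_eq0 //; exact: I_bot.
have ym := glb _ (hat_elem_of y) key.
have /(hat_of_le y a) ya := hat_trans ym ma.
exact: (sp a).1 ya (le_refl _).
Qed.

Lemma part1b (a : L) : cmi_hat sub (hat_of a) -> cmiL a.
Proof.
move=> [_ [ntop main]].
pose q := fun z => ~ z <= a.
have hq : prime_filter q.
  split; first by move=> ta; apply: ntop; exact/(hat_of_le \top a).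
  split; first by apply; exact: le0x.
  split; first by move=> u v uv nu va; apply: nu; exact: le_trans uv va.
  split.
    move=> z w nz nw zwa.
    have inf : is_inf (hat_le sub) (hat_elem sub)
        (fun al => al = hat_of z \/ al = hat_of w) (hat_of (z `&` w)).
      split; first exact: hat_elem_of.
      split; first by move=> al [->|->]; apply/hat_of_le; [exact: leIl|exact: leIr].
      move=> m' _ lb; have /hat_le_iff l1 := lb _ (or_introl erefl).
      have /hat_le_iff l2 := lb _ (or_intror erefl).
      apply/hat_le_iff => d d0; apply: I_down (sub_meetr _ _ _) _.
      apply: I_join; [exact: l1|exact: l2].
    have [al [[->|->] /hat_of_le]] := main _ _ (fun al Hal => match Hal with
        | or_introl e => eq_ind_r _ (hat_elem_of z) e
        | or_intror e => eq_ind_r _ (hat_elem_of w) e end) inf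
       (proj2 (hat_of_le _ _) zwa).
      exact: nz.
    exact: nw.
  move=> u v nuv; apply: NNPP => /not_or_and [/NNPP ua /NNPP va]; apply: nuv.
  by rewrite leUx ua va.
have hnot : ~ (forall d, (0 < d)%N -> exists c, DD d c /\ q c).
  move=> hall.
  have inf : is_inf (hat_le sub) (hat_elem sub)
      (fun al => exists z, q z /\ al = hat_of z) (hat_of \bot).
    split; first exact: hat_elem_of.
    split; first by move=> al [z [_ ->]]; apply/hat_of_le; exact: le0x.
    move=> m' _ lb; apply/hat_le_iff => d d0.
    have [i [Ii qi]] := hall d d0.
    have /hat_le_iff li := lb _ (ex_intro _ i (conj qi erefl)).
    apply: I_down (sub_self_le _ _) _.
    apply: I_down (sub_le (m' d) i) _; apply: I_join => //; exact: li.
  have [al [[z [qz ->]] /hat_of_le za]] := main _ _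
    (fun al Hal => match Hal with ex_intro z (conj _ e) => eq_ind_r _ (hat_elem_of z) e end)
    inf (proj2 (hat_of_le _ _) (le0x a)).
  exact: qz za.
have [x [y [sp Hq]]] := GEN hq hnot.
have -> : a = x.
  apply: (split_uniq_l _ sp) => z; split.
    by move=> yz; apply/(Hq z).2.
  by move/(Hq z).1.
exact: split_cmi sp.
Qed.

Lemma part1c (x : nat -> L) : cmi_hat sub x -> exists a : L, hat_eq sub x (hat_of a).
Proof.
move=> [ex [_ main]].
pose A := fun al => exists z, al = hat_of z /\ hat_le sub x (hat_of z).
have inf : is_inf (hat_le sub) (hat_elem sub) A x.
  split => //; split; first by move=> al [z [-> h]].
  move=> m' _ lb; apply/hat_le_iff => d d0.
  have [M [IM HM]] := BND _ d0.
  pose z := x d `|` M.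
  have xz : hat_le sub x (hat_of z).
    apply/hat_le_iff => e e0; rewrite /hat_of.
    case: (leqP e d) => [ed|de].
      have [_ c2] := hat_chain ex _ _ e0 ed.
      apply: I_down c2; apply: sub_anti_r; exact: leUl.
    have [c1 _] := hat_chain ex _ _ d0 (ltnW de).
    rewrite sub_eq0; first exact: I_bot.
    apply: le_trans (sub_le (x e) (x d)) _; apply: leU2 (le_refl _) _; exact: HM _ c1.
  have /hat_le_iff lz := lb _ (ex_intro _ z (conj erefl xz)).
  apply: I_down (sub_trans _ z _) _; apply: I_join; first exact: lz.
  exact: I_down (sub_join_le _ _) IM.
have [al [[z [-> xz]] zx]] := main A x
  (fun al Hal => match Hal with ex_intro z (conj e _) => eq_ind_r _ (hat_elem_of z) e end)
  inf (hat_refl x).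
by exists z.
Qed.

Lemma main_result :
  ((forall a : L, cmiL a <-> cmi_hat sub (hat_of a)) /\
   (forall x : nat -> L, cmi_hat sub x -> exists a : L, hat_eq sub x (hat_of a))) /\
  (exists vee wedge : L -> L,
     (forall x, cmiL x -> is_inf Lle Lall (fun y => ~ (y <= x)) (vee x)) /\
     (forall y, cjiL y -> is_sup Lle Lall (fun z => ~ (y <= z)) (wedge y)) /\
     (forall x, cmiL x -> cjiL (vee x)) /\
     (forall y, cjiL y -> cmiL (wedge y)) /\
     (forall x, cmiL x -> wedge (vee x) = x) /\
     (forall y, cjiL y -> vee (wedge y) = y) /\
     (forall x1 x2, cmiL x1 -> cmiL x2 -> x1 <= x2 -> vee x1 <= vee x2) /\
     (forall y1 y2, cjiL y1 -> cjiL y2 -> y1 <= y2 -> wedge y1 <= wedge y2)) /\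
  (forall x, cmiL x -> rank_finite (fun y z : L => cmiL y /\ z < y) x) /\
  (forall u : nat -> L, (forall n, cmiL (u n)) -> (forall n, u n <= u n.+1) ->
     exists N, forall n, (N <= n)%N -> u n = u N) /\
  (forall a : L, is_inf Lle Lall (fun x => cmiL x /\ a <= x) a).
Proof.
split; first split.
- by move=> a; split; [exact: part1a|exact: part1b].
- exact: part1c.
split; first exact: part2.
split; first exact: part3.
split; first exact: part4.
exact: part5.
Qed.

End Main.

Theorem proposition6p7 (disp : Order.disp_t) (L : tbDistrLatticeType disp)
  (sub : L -> L -> L) (Hsub : is_coHeyting_diff sub)
  (Hhaus : hausdorff L) (Hpre : precompact sub) :
  (* (1) L and hat L have the same completely meet irreducible elements *)
  ((forall a : L, cmiL a <-> cmi_hat sub (hat_of a)) /\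
   (forall x : nat -> L, cmi_hat sub x -> exists a : L, hat_eq sub x (hat_of a))) /\
  (* (2) x^vee and x^wedge are well defined, mutually inverse, order preserving
         bijections between I^{!/\}(L) and I^{!\/}(L) *)
  (exists vee wedge : L -> L,
     (forall x, cmiL x -> is_inf Lle Lall (fun y => ~ (y <= x)) (vee x)) /\
     (forall y, cjiL y -> is_sup Lle Lall (fun z => ~ (y <= z)) (wedge y)) /\
     (forall x, cmiL x -> cjiL (vee x)) /\
     (forall y, cjiL y -> cmiL (wedge y)) /\
     (forall x, cmiL x -> wedge (vee x) = x) /\
     (forall y, cjiL y -> vee (wedge y) = y) /\
     (forall x1 x2, cmiL x1 -> cmiL x2 -> x1 <= x2 -> vee x1 <= vee x2) /\
     (forall y1 y2, cjiL y1 -> cjiL y2 -> y1 <= y2 -> wedge y1 <= wedge y2)) /\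
  (* (3) cofoundation rank of each x in I^{!/\}(L) is finite *)
  (forall x, cmiL x -> rank_finite (fun y z : L => cmiL y /\ z < y) x) /\
  (* (4) ACC on I^{!/\}(L) *)
  (forall u : nat -> L, (forall n, cmiL (u n)) -> (forall n, u n <= u n.+1) ->
     exists N, forall n, (N <= n)%N -> u n = u N) /\
  (* (5) every a is the complete meet of the cmi elements above it *)
  (forall a : L, is_inf Lle Lall (fun x => cmiL x /\ a <= x) a).
Proof.
exact: (main_result sub Hsub Hhaus Hpre).
Qed.
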